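(* Let $\{\gamma_k\}$ be strictly positive numbers with $\gamma_k\to\infty$, $\{g_k\}$ probability generating functions, $G_k(z)=k\gamma_k[g_k(e^{-z/k})-e^{-z/k}]$ for $z\ge0$, and $v_k(t,\lambda)=-k\log g_k^{[\gamma_kt]}(e^{-\lambda/k})$. Suppose that for every $a\ge0$ the sequence $\{G_k\}$ is uniformly Lipschitz on $[0,a]$ and $G_k\to\phi$ uniformly on $[0,a]$ for some function $\phi$ on $[0,\infty)$. Then for every $a\ge0$, $v_k(t,\lambda)$ converges uniformly on $(t,\lambda)\in[0,a]^2$ to some limit $v_t(\lambda)$, and the limit satisfies $$v_t(\lambda)=\lambda-\int_0^t\phi(v_s(\lambda))\,\mathrm ds,\qquad\lambda,t\ge0.$$
   Context: $g_k^n$ denotes the $n$-fold iterate of $g_k$ with $g_k^0(z)=z$; $[x]$ is the integer part of $x$. *)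

(* Defs.v *)
From Stdlib Require Import Reals.
From Coquelicot Require Import Coquelicot.
Open Scope R_scope.

Definition is_pgf (g : R -> R) : Prop :=
  exists p : nat -> R,
    (forall i, 0 <= p i) /\ is_series p 1 /\
    (forall s, 0 <= s <= 1 -> is_series (fun i => p i * s ^ i) (g s)).

Definition iter_fun (n : nat) (g : R -> R) : R -> R := Nat.iter n g.

Definition int_part (x : R) : nat := Z.to_nat (Int_part x).

Definition Gk (gam : nat -> R) (g : nat -> R -> R) (k : nat) (z : R) : R :=
  INR k * gam k * (g k (exp (- z / INR k)) - exp (- z / INR k)).

Definition vk (gam : nat -> R) (g : nat -> R -> R) (k : nat) (t lam : R) : R :=
  - INR k * ln (iter_fun (int_part (gam k * t)) (g k) (exp (- lam / INR k))).

(* Main.v *)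
Require Import Defs.
From Stdlib Require Import Reals.
From Coquelicot Require Import Coquelicot.
From Stdlib Require Import Lra Lia Psatz ZArith.
Open Scope R_scope.

Lemma sum_n_le_R (a b : nat -> R) n : (forall i, a i <= b i) -> sum_n a n <= sum_n b n.
Proof.
  intros H; induction n.
  - rewrite !sum_O; apply H.
  - rewrite !sum_Sn; unfold plus; simpl; specialize (H (S n)); lra.
Qed.

Lemma series_le (a b : nat -> R) A B : is_series a A -> is_series b B ->
  (forall i, a i <= b i) -> A <= B.
Proof.
  intros Ha Hb H.
  exact (is_lim_seq_le (sum_n a) (sum_n b) A B (fun n => sum_n_le_R a b n H) Ha Hb).
Qed.

Lemma pow_01 (s : R) (i : nat) : 0 <= s <= 1 -> 0 <= s ^ i <= 1.
Proof.
  intros Hs; split; [apply pow_le; lra|]. rewrite <- (pow1 i). apply pow_incr; lra.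
Qed.

Lemma pow_conv1 (s th : R) (i : nat) : 0 <= s <= 1 -> 0 <= th <= 1 ->
  (th * s + (1 - th)) ^ i <= th * s ^ i + (1 - th).
Proof.
  intros Hs Ht; induction i.
  - simpl; lra.
  - simpl. assert (H1 := pow_01 s i Hs).
    assert (0 <= th * s + (1 - th)) by nra.
    apply Rle_trans with ((th * s + (1 - th)) * (th * s ^ i + (1 - th))).
    + apply Rmult_le_compat_l; auto.
    + assert (0 <= th * (1-th) * (1-s) * (1 - s^i)).
      { apply Rmult_le_pos; [|lra]. apply Rmult_le_pos; [|lra]. nra. }
      nra.
Qed.

Lemma pgf_props (g : R -> R) : is_pgf g ->
  g 1 = 1 /\ (forall s, 0 <= s <= 1 -> 0 <= g s <= 1) /\
  (forall s th, 0 <= s <= 1 -> 0 <= th <= 1 -> g (th * s + (1 - th)) <= th * g s + (1 - th)).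
Proof.
  intros [p [Hp [H1 Hs]]].
  assert (Hg1 : g 1 = 1).
  { assert (A := Hs 1 ltac:(lra)).
    apply is_series_unique in A. apply is_series_unique in H1.
    rewrite <- A. transitivity (Series p); [|exact H1]. apply Series_ext. intros n; rewrite pow1; ring. }
  split; [exact Hg1|split].
  - intros s Hs01. split.
    + assert (Z := is_series_scal 0 p 1 H1).
      replace 0 with (scal 0 (1:R)) by (unfold scal; simpl; unfold mult; simpl; ring).
      apply (series_le (fun n => scal 0 (p n)) (fun i => p i * s ^ i)); auto.
      * intros i; unfold scal; simpl; unfold mult; simpl. rewrite Rmult_0_l.
        apply Rmult_le_pos; auto. apply pow_01; auto.
    + apply (series_le (fun i => p i * s ^ i) p); auto.
      intros i; assert (X := pow_01 s i Hs01); specialize (Hp i); nra.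
  - intros s th Hs01 Ht.
    assert (A1 := is_series_scal th _ _ (Hs s Hs01)).
    assert (A2 := is_series_scal (1-th) _ _ H1).
    assert (A3 := is_series_plus _ _ _ _ A1 A2).
    assert (E : plus (scal th (g s)) (scal (1 - th) 1) = th * g s + (1 - th))
      by (unfold plus, scal; simpl; unfold mult; simpl; ring).
    rewrite <- E.
    refine (series_le _ _ _ _ (Hs _ _) A3 _).
    + nra.
    + intros i; unfold plus, scal; simpl; unfold mult; simpl.
      assert (X := pow_conv1 s th i Hs01 Ht). specialize (Hp i). nra.
Qed.

Lemma growth (g : R -> R) (kk gm L1 : R) :
  1 <= kk -> 0 < gm -> 0 <= L1 ->
  (forall s, 0 <= s <= 1 -> 0 <= g s <= 1) -> g 1 = 1 ->
  (forall s th, 0 <= s <= 1 -> 0 <= th <= 1 -> g (th * s + (1 - th)) <= th * g s + (1 - th)) ->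
  (forall w, 0 <= w <= 1 -> Rabs (kk * gm * (g (exp (- w / kk)) - exp (- w / kk))) <= L1 * w) ->
  forall s, 0 <= s <= 1 -> 1 - g s <= (1 + 2 * L1 / gm) * (1 - s).
Proof.
  intros Hk Hg HL Hg01 Hg1 Hconv HG s Hs.
  assert (HLg : 0 <= L1 / gm) by (apply Rdiv_le_0_compat; lra).
  destruct (Req_dec s 0) as [->|Hs0].
  { assert (X := Hg01 0 ltac:(lra)). lra. }
  destruct (Req_dec s 1) as [->|Hs1].
  { rewrite Hg1; lra. }
  assert (Hs' : 0 < s < 1) by lra.
  set (z := - kk * ln s).
  assert (Hz : 0 < z).
  { unfold z. assert (ln s < 0). { rewrite <- ln_1. apply ln_increasing; lra. } nra. }
  set (w := Rmin 1 z / 2).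
  assert (Hw : 0 < w <= 1/2 /\ w < z).
  { unfold w; unfold Rmin; destruct (Rle_dec 1 z); lra. }
  set (r := exp (- w / kk)).
  assert (Hkp : 0 < kk) by lra.
  assert (Hr1 : r < 1).
  { unfold r; rewrite <- exp_0. apply exp_increasing.
    assert (0 < w / kk) by (apply Rdiv_lt_0_compat; lra). unfold Rdiv in *; lra. }
  assert (Hsr : s < r).
  { unfold r. rewrite <- (exp_ln s) by lra. apply exp_increasing.
    assert (ln s = - z / kk) by (unfold z; field; lra). rewrite H.
    unfold Rdiv; apply Rmult_lt_compat_r; [apply Rinv_0_lt_compat; lra| lra]. }
  set (th := (1 - r) / (1 - s)).
  assert (Hth : 0 <= th <= 1).
  { unfold th; split; [apply Rdiv_le_0_compat; lra|].
    apply Rmult_le_reg_r with (1 - s); [lra|]. unfold Rdiv; rewrite Rmult_assoc, Rinv_l by lra. lra. }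
  assert (Hrth : th * s + (1 - th) = r) by (unfold th; field; lra).
  assert (C := Hconv s th ltac:(lra) Hth). rewrite Hrth in C.
  assert (G := HG w ltac:(lra)). fold r in G.
  apply Rabs_le_between in G.
  assert (Hx : 0 < w / kk <= 1/2).
  { split; [apply Rdiv_lt_0_compat; lra|]. apply Rmult_le_reg_r with kk; [lra|].
    unfold Rdiv; rewrite Rmult_assoc, Rinv_l by lra. nra. }
  assert (H1r : w / kk / 2 <= 1 - r).
  { assert (E := exp_ineq1_le (w / kk)).
    assert (Er : r * exp (w / kk) = 1).
    { unfold r; rewrite <- exp_plus. replace (- w / kk + w / kk) with 0 by (unfold Rdiv; ring). apply exp_0. }
    nra. }
  assert (Hgr : r - g r <= L1 * w / (kk * gm)).
  { apply Rmult_le_reg_r with (kk * gm); [nra|].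
    unfold Rdiv; rewrite Rmult_assoc, Rinv_l by nra. nra. }
  assert (Hb : L1 * w / (kk * gm) <= (1 - r) * (2 * L1 / gm)).
  { replace (L1 * w / (kk * gm)) with ((w / kk) * (L1 / gm)) by (field; lra).
    replace ((1 - r) * (2 * L1 / gm)) with (2 * (1 - r) * (L1 / gm)) by (field; lra).
    apply Rmult_le_compat_r; lra. }
  assert (Hm : th * (1 - g s) <= (1 - r) * (1 + 2 * L1 / gm)) by lra.
  unfold th in Hm.
  replace ((1 - r) / (1 - s) * (1 - g s)) with ((1 - r) * ((1 - g s) / (1 - s))) in Hm by (field; lra).
  apply Rmult_le_reg_l in Hm; [|lra].
  apply Rmult_le_reg_r with (/ (1 - s)). apply Rinv_0_lt_compat; lra.
  replace ((1 + 2 * L1 / gm) * (1 - s) * / (1 - s)) with (1 + 2 * L1 / gm) by (field; lra).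
  exact Hm.
Qed.

Lemma ln_le_xm1 y : 0 < y -> ln y <= y - 1.
Proof.
  intros Hy. rewrite <- (ln_exp (y - 1)). apply ln_le; auto.
  assert (X := exp_ineq1_le (y - 1)). lra.
Qed.

Lemma ln_ge_1m y : 0 < y -> 1 - / y <= ln y.
Proof.
  intros Hy. assert (X := ln_le_xm1 (/ y) ltac:(apply Rinv_0_lt_compat; lra)).
  rewrite ln_Rinv in X by lra. lra.
Qed.

Lemma step_est (kk gm s gs M eps ph D : R) :
  1 <= kk -> 1 <= gm -> 1/2 <= s <= 1 -> 1 - s <= D / kk -> 0 <= M -> 4 * M <= kk * gm ->
  Rabs (kk * gm * (gs - s)) <= M -> Rabs (kk * gm * (gs - s) - ph) <= eps ->
  0 < gs /\
  Rabs (gm * (- kk * ln gs - - kk * ln s) + ph) <= eps + 8 * M ^ 2 / (kk * gm) + 2 * M * D / kk.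
Proof.
  intros Hk Hg Hs HD HM HMk HGv Hph.
  set (Gv := kk * gm * (gs - s)) in *.
  set (x := (gs - s) / s).
  assert (Hkg : 1 <= kk * gm) by nra.
  assert (HGx : Gv = kk * gm * s * x) by (unfold Gv, x; field; lra).
  assert (Hx : Rabs x <= 2 * M / (kk * gm)).
  { apply Rmult_le_reg_l with (kk * gm * s); [nra|].
    rewrite <- (Rabs_pos_eq (kk * gm * s)) at 1 by nra. rewrite <- Rabs_mult, <- HGx.
    replace (kk * gm * s * (2 * M / (kk * gm))) with (2 * s * M) by (field; lra). nra. }
  assert (Hx2 : Rabs x <= 1/2).
  { apply Rle_trans with (1 := Hx). apply Rmult_le_reg_r with (kk*gm); [lra|].
    unfold Rdiv; rewrite Rmult_assoc, Rinv_l by lra. lra. }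
  apply Rabs_le_between in Hx2.
  assert (Hgs : gs = s * (1 + x)) by (unfold x; field; lra).
  assert (Hgs0 : 0 < gs) by (rewrite Hgs; nra).
  split; [exact Hgs0|].
  assert (Eln : ln gs = ln s + ln (1 + x)) by (rewrite Hgs; apply ln_mult; lra).
  rewrite Eln.
  assert (L1 := ln_le_xm1 (1 + x) ltac:(lra)).
  assert (L2 := ln_ge_1m (1 + x) ltac:(lra)).
  assert (L3 : x - ln (1 + x) <= 2 * x ^ 2).
  { assert (1 - / (1 + x) = x / (1 + x)) by (field; lra).
    assert (x - x / (1 + x) = x^2 / (1+x)) by (field; lra).
    assert (x ^ 2 / (1 + x) <= 2 * x ^ 2).
    { apply Rmult_le_reg_r with (1 + x); [lra|]. unfold Rdiv; rewrite Rmult_assoc, Rinv_l by lra. nra. }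
    lra. }
  replace (gm * (- kk * (ln s + ln (1 + x)) - - kk * ln s) + ph)
    with ((ph - Gv) + kk * gm * (x - ln (1 + x)) - kk * gm * x * (1 - s))
    by (rewrite HGx; ring).
  assert (T1 : Rabs (ph - Gv) <= eps) by (rewrite Rabs_minus_sym; exact Hph).
  assert (T2 : Rabs (kk * gm * (x - ln (1 + x))) <= 8 * M ^ 2 / (kk * gm)).
  { rewrite Rabs_pos_eq by nra.
    assert (x ^ 2 <= (2 * M / (kk * gm)) ^ 2).
    { apply pow_maj_Rabs; exact Hx. }
    replace (8 * M ^ 2 / (kk * gm)) with (kk * gm * (2 * (2 * M / (kk * gm)) ^ 2)) by (field; lra).
    apply Rmult_le_compat_l; [lra|]. nra. }
  assert (T3 : Rabs (kk * gm * x * (1 - s)) <= 2 * M * D / kk).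
  { rewrite Rabs_mult. rewrite (Rabs_pos_eq (1 - s)) by lra.
    assert (Rabs (kk * gm * x) <= 2 * M).
    { rewrite Rabs_mult, (Rabs_pos_eq (kk*gm)) by lra.
      replace (2 * M) with (kk * gm * (2 * M / (kk * gm))) by (field; lra).
      apply Rmult_le_compat_l; lra. }
    replace (2 * M * D / kk) with (2 * M * (D / kk)) by (field; lra).
    apply Rmult_le_compat; auto using Rabs_pos; lra. }
  assert (A := Rabs_triang (ph - Gv + kk * gm * (x - ln (1 + x))) (- (kk * gm * x * (1 - s)))).
  assert (B := Rabs_triang (ph - Gv) (kk * gm * (x - ln (1 + x)))).
  rewrite Rabs_Ropp in A. unfold Rminus at 1. lra.
Qed.

Lemma int_part_spec x : 0 <= x -> INR (int_part x) <= x < INR (int_part x) + 1.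
Proof.
  intros Hx. unfold int_part. destruct (base_Int_part x) as [H1 H2].
  assert (Hz : (0 <= Int_part x)%Z).
  { apply le_IZR. assert (IZR (Int_part x) > -1) by lra.
    apply lt_IZR in H. simpl; apply IZR_le; lia. }
  rewrite INR_IZR_INZ, Z2Nat.id by exact Hz. lra.
Qed.

Lemma int_part_mono x y : 0 <= x <= y -> (int_part x <= int_part y)%nat.
Proof.
  intros H. assert (A := int_part_spec x ltac:(lra)). assert (B := int_part_spec y ltac:(lra)).
  assert (INR (int_part x) < INR (int_part y) + 1) by lra.
  rewrite <- S_INR in H0. apply INR_lt in H0. lia.
Qed.

Lemma local_cons (u : nat -> R) (ph : R -> R) (gm eta L M B : R) (Nmax : nat) :
  1 <= gm -> 0 <= eta <= 1 -> 0 <= L -> 0 <= M ->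
  (forall n, (n <= Nmax)%nat -> 0 <= u n <= B) ->
  (forall x y, 0 <= x <= B -> 0 <= y <= B -> Rabs (ph x - ph y) <= L * Rabs (x - y)) ->
  (forall x, 0 <= x <= B -> Rabs (ph x) <= M) ->
  (forall n, (n < Nmax)%nat -> Rabs (gm * (u (S n) - u n) + ph (u n)) <= eta) ->
  forall n p, (n + p <= Nmax)%nat ->
    Rabs (u (n + p)%nat - u n) <= INR p * (M + 1) / gm /\
    Rabs (u (n + p)%nat - u n + (INR p / gm) * ph (u n)) <=
      INR p * eta / gm + L * (M + 1) * (INR p * INR p) / (gm * gm).
Proof.
  intros Hg He HL HM Hu Hlip Hb Hst n p. induction p as [|p IH]; intros Hnp.
  - rewrite Nat.add_0_r. simpl INR.
    replace (u n - u n + 0 / gm * ph (u n)) with 0 by (field; lra).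
    replace (u n - u n) with 0 by ring. rewrite Rabs_R0.
    split; right; field; lra.
  - destruct (IH ltac:(lia)) as [I1 I2].
    replace (n + S p)%nat with (S (n + p)) by lia.
    assert (S1 := Hst (n + p)%nat ltac:(lia)).
    assert (Bp := Hb (u (n + p)%nat) (Hu (n+p)%nat ltac:(lia))).
    assert (Lp := Hlip (u (n+p)%nat) (u n) (Hu (n+p)%nat ltac:(lia)) (Hu n ltac:(lia))).
    set (r := gm * (u (S (n + p)) - u (n + p)%nat) + ph (u (n + p)%nat)) in *.
    assert (Ed : u (S (n + p)) - u (n + p)%nat = (r - ph (u (n + p)%nat)) / gm) by (unfold r; field; try lra).
    rewrite S_INR.
    assert (Hgi : 0 < / gm <= 1) by (split; [apply Rinv_0_lt_compat; lra| rewrite <- Rinv_1; apply Rinv_le_contravar; lra]).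
    assert (Hd : Rabs (u (S (n + p)) - u (n + p)%nat) <= (M + 1) / gm).
    { rewrite Ed. unfold Rdiv. rewrite Rabs_mult, (Rabs_pos_eq (/ gm)) by lra.
      apply Rmult_le_compat_r; [lra|].
      assert (X := Rabs_triang r (- ph (u (n+p)%nat))). rewrite Rabs_Ropp in X. unfold Rminus. lra. }
    split.
    + replace (u (S (n + p)) - u n) with ((u (S (n + p)) - u (n + p)%nat) + (u (n + p)%nat - u n)) by ring.
      eapply Rle_trans; [apply Rabs_triang|].
      replace ((INR p + 1) * (M + 1) / gm) with (INR p * (M + 1) / gm + (M + 1) / gm) by (field; lra).
      lra.
    + replace (u (S (n + p)) - u n + (INR p + 1) / gm * ph (u n)) with
        ((u (n + p)%nat - u n + INR p / gm * ph (u n)) + (r / gm) + (ph (u n) - ph (u (n+p)%nat)) / gm)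
        by (unfold r; field; lra).
      eapply Rle_trans; [apply Rabs_triang|].
      eapply Rle_trans; [apply Rplus_le_compat_r; apply Rabs_triang|].
      rewrite Rabs_minus_sym in Lp.
      assert (T : Rabs (ph (u n) - ph (u (n + p)%nat)) * / gm <= L * (INR p * (M + 1) / gm) / gm).
      { unfold Rdiv at 2. apply Rmult_le_compat_r; [lra|].
        apply Rle_trans with (1 := Lp). apply Rmult_le_compat_l; auto. }
      assert (T2 : Rabs r * / gm <= eta / gm) by (unfold Rdiv; apply Rmult_le_compat_r; lra).
      assert (Hp0 : 0 <= INR p) by apply pos_INR.
      assert (E : (INR p + 1) * eta / gm + L * (M + 1) * ((INR p + 1) * (INR p + 1)) / (gm * gm)
         = (INR p * eta / gm + L * (M + 1) * (INR p * INR p) / (gm * gm)) + eta / gm +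
           L * (INR p * (M + 1) / gm) / gm + L * (M+1) * (INR p + 1) / (gm * gm)) by (field; lra).
      rewrite E.
      assert (0 <= L * (M+1) * (INR p + 1) / (gm * gm)).
      { apply Rdiv_le_0_compat; [|nra]. apply Rmult_le_pos; [nra|lra]. }
      assert (T' : Rabs ((ph (u n) - ph (u (n + p)%nat)) / gm) <= L * (INR p * (M + 1) / gm) / gm)
        by (unfold Rdiv at 1; rewrite Rabs_mult, (Rabs_pos_eq (/gm)) by lra; exact T).
      assert (T2' : Rabs (r / gm) <= eta / gm)
        by (unfold Rdiv at 1; rewrite Rabs_mult, (Rabs_pos_eq (/gm)) by lra; exact T2).
      lra.
Qed.

Lemma W_cons (u : nat -> R) (ph : R -> R) (gm eta L M B a : R) :
  1 <= gm -> 0 <= eta <= 1 -> 0 <= L -> 0 <= M -> 0 <= a ->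
  (forall n, (n <= int_part (gm * a))%nat -> 0 <= u n <= B) ->
  (forall x y, 0 <= x <= B -> 0 <= y <= B -> Rabs (ph x - ph y) <= L * Rabs (x - y)) ->
  (forall x, 0 <= x <= B -> Rabs (ph x) <= M) ->
  (forall n, (n < int_part (gm * a))%nat -> Rabs (gm * (u (S n) - u n) + ph (u n)) <= eta) ->
  forall s t, 0 <= s <= t -> t <= a ->
    Rabs (u (int_part (gm * t)) - u (int_part (gm * s)) + (t - s) * ph (u (int_part (gm * s))))
      <= 2 * L * (M + 1) * (t - s) ^ 2 + ((a + 1) * eta + 2 * L * (M + 1) / (gm * gm) + M / gm).
Proof.
  intros Hg He HL HM Ha Hu Hlip Hb Hst s t Hst' Hta.
  set (n := int_part (gm * s)). set (m := int_part (gm * t)).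
  assert (Sn := int_part_spec (gm * s) ltac:(nra)). fold n in Sn.
  assert (Sm := int_part_spec (gm * t) ltac:(nra)). fold m in Sm.
  assert (Hnm : (n <= m)%nat) by (apply int_part_mono; nra).
  assert (Hma : (m <= int_part (gm * a))%nat) by (apply int_part_mono; nra).
  set (p := (m - n)%nat).
  assert (Em : m = (n + p)%nat) by (unfold p; lia).
  destruct (local_cons u ph gm eta L M B (int_part (gm * a)) Hg He HL HM Hu Hlip Hb Hst n p
    ltac:(lia)) as [_ C].
  rewrite <- Em in C.
  assert (Ep : INR p = INR m - INR n) by (unfold p; rewrite minus_INR; auto).
  set (d := INR p / gm) in *.
  assert (Hd : t - s - 1 / gm <= d <= t - s + 1 / gm).
  { unfold d; rewrite Ep. split.
    - apply Rmult_le_reg_r with gm; [lra|]. unfold Rdiv; rewrite Rmult_assoc, Rinv_l by lra.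
      replace ((t - s - 1 * / gm) * gm) with (gm * t - gm * s - 1) by (field; lra). lra.
    - apply Rmult_le_reg_r with gm; [lra|]. unfold Rdiv; rewrite Rmult_assoc, Rinv_l by lra.
      replace ((t - s + 1 * / gm) * gm) with (gm * t - gm * s + 1) by (field; lra). lra. }
  assert (Hd0 : 0 <= d) by (unfold d; apply Rdiv_le_0_compat; [apply pos_INR|lra]).
  assert (Hig : 0 < 1 / gm <= 1) by (split; [apply Rdiv_lt_0_compat; lra| apply Rmult_le_reg_r with gm; [lra|]; unfold Rdiv; rewrite Rmult_assoc, Rinv_l by lra; lra]).
  assert (Cd : INR p * eta / gm = d * eta) by (unfold d; field; lra).
  assert (Cd2 : L * (M + 1) * (INR p * INR p) / (gm * gm) = L * (M + 1) * (d * d)) by (unfold d; field; lra).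
  rewrite Cd, Cd2 in C.
  assert (Bn := Hb (u n) (Hu n ltac:(lia))).
  replace (u m - u n + (t - s) * ph (u n)) with ((u m - u n + d * ph (u n)) + (t - s - d) * ph (u n)) by ring.
  eapply Rle_trans; [apply Rabs_triang|].
  rewrite Rabs_mult.
  assert (X1 : Rabs (t - s - d) * Rabs (ph (u n)) <= (1 / gm) * M).
  { apply Rmult_le_compat; try apply Rabs_pos; auto. apply Rabs_le; lra. }
  assert (X2 : d * eta <= (a + 1) * eta) by (apply Rmult_le_compat_r; lra).
  assert (X3 : L * (M + 1) * (d * d) <= 2 * L * (M + 1) * (t - s) ^ 2 + 2 * L * (M + 1) / (gm * gm)).
  { assert (d * d <= 2 * (t - s) ^ 2 + 2 * (1/gm) * (1/gm)).
    { set (q := 1/gm) in *. set (w := t - s) in *.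
      assert (d * d <= (w + q) * (w + q)) by (apply Rmult_le_compat; lra).
      assert (0 <= (w - q) * (w - q)) by apply Rle_0_sqr. simpl. lra. }
    replace (2 * L * (M + 1) * (t - s) ^ 2 + 2 * L * (M + 1) / (gm * gm)) with
      (L * (M + 1) * (2 * (t - s) ^ 2 + 2 * (1/gm) * (1/gm))) by (field; lra).
    apply Rmult_le_compat_l; [nra|lra]. }
  replace (M / gm) with (1 / gm * M) by (field; lra). lra.
Qed.

Lemma exp_le_mono x y : x <= y -> exp x <= exp y.
Proof. intros [H|H]; [left; apply exp_increasing; auto| right; subst; auto]. Qed.

Lemma abs4 a b c d : Rabs (a - b + c - d) <= Rabs a + Rabs b + Rabs c + Rabs d.
Proof.
  assert (T1 := Rabs_triang (a - b + c) (- d)).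
  assert (T2 := Rabs_triang (a - b) c).
  assert (T3 := Rabs_triang a (- b)).
  rewrite Rabs_Ropp in T1, T3. unfold Rminus in *. lra.
Qed.

Lemma exp_pow_le (x : R) (j : nat) : 0 <= x -> (1 + x) ^ j <= exp (INR j * x).
Proof.
  intros Hx. induction j.
  - simpl. rewrite Rmult_0_l, exp_0. lra.
  - rewrite S_INR. replace ((INR j + 1) * x) with (x + INR j * x) by ring.
    rewrite exp_plus. simpl. apply Rmult_le_compat; try lra.
    + apply pow_le; lra.
    + apply exp_ineq1_le.
Qed.

Lemma stab (ph : R -> R) (a B L M K beta dl : R) (N : nat) (X Y : R -> R) :
  0 <= L -> 0 <= M -> 0 <= K -> 0 <= beta -> 0 < dl -> INR N * dl = a ->
  (forall x y, 0 <= x <= B -> 0 <= y <= B -> Rabs (ph x - ph y) <= L * Rabs (x - y)) ->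
  (forall x, 0 <= x <= B -> Rabs (ph x) <= M) ->
  (forall t, 0 <= t <= a -> 0 <= X t <= B) ->
  (forall t, 0 <= t <= a -> 0 <= Y t <= B) ->
  X 0 = Y 0 ->
  (forall s t, 0 <= s <= t -> t <= a -> Rabs (X t - X s + (t - s) * ph (X s)) <= K * (t - s) ^ 2 + beta) ->
  (forall s t, 0 <= s <= t -> t <= a -> Rabs (Y t - Y s + (t - s) * ph (Y s)) <= K * (t - s) ^ 2 + beta) ->
  forall t, 0 <= t <= a ->
    Rabs (X t - Y t) <= exp (L * a) * INR N * (2 * K * dl ^ 2 + 2 * beta) + 2 * (M * dl + K * dl ^ 2 + beta).
Proof.
  intros HL HM HK Hb Hdl HN Hlip Hph HX HY H0 CX CY.
  set (c0 := 2 * K * dl ^ 2 + 2 * beta).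
  assert (Hc0 : 0 <= c0) by (unfold c0; nra).
  assert (Grid : forall j, (j <= N)%nat -> Rabs (X (INR j * dl) - Y (INR j * dl)) <= (1 + L * dl) ^ j * INR j * c0).
  { induction j; intros Hj.
    - simpl. rewrite Rmult_0_l, H0. unfold Rminus; rewrite Rplus_opp_r, Rabs_R0. lra.
    - assert (IH := IHj ltac:(lia)).
      assert (Hj' : INR (S j) * dl <= a) by (rewrite <- HN; apply Rmult_le_compat_r; [lra|apply le_INR; auto]).
      assert (Hjp : 0 <= INR j * dl) by (apply Rmult_le_pos; [apply pos_INR|lra]).
      assert (Hja : INR j * dl <= INR (S j) * dl) by (rewrite S_INR; lra).
      assert (E : INR (S j) * dl - INR j * dl = dl) by (rewrite S_INR; ring).
      assert (Ex := CX (INR j * dl) (INR (S j) * dl) ltac:(lra) Hj'). rewrite E in Ex.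
      assert (Ey := CY (INR j * dl) (INR (S j) * dl) ltac:(lra) Hj'). rewrite E in Ey.
      assert (Lp := Hlip (X (INR j * dl)) (Y (INR j * dl)) (HX (INR j * dl) ltac:(lra)) (HY (INR j * dl) ltac:(lra))).
      set (xs := X (INR j * dl)) in *. set (ys := Y (INR j * dl)) in *.
      set (xt := X (INR (S j) * dl)) in *. set (yt := Y (INR (S j) * dl)) in *.
      replace (xt - yt) with ((xt - xs + dl * ph xs) - (yt - ys + dl * ph ys) + (xs - ys) - dl * (ph xs - ph ys)) by ring.
      assert (T1 := abs4 (xt - xs + dl * ph xs) (yt - ys + dl * ph ys) (xs - ys) (dl * (ph xs - ph ys))).
      rewrite Rabs_mult, (Rabs_pos_eq dl) in T1 by lra.
      assert (Hpw : 1 <= (1 + L * dl) ^ j).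
      { assert (0 <= L * dl) by (apply Rmult_le_pos; lra).
        assert (1 ^ j <= (1 + L * dl) ^ j) by (apply pow_incr; split; lra). rewrite pow1 in H1; exact H1. }
      assert (Hj0 : 0 <= INR j) by apply pos_INR.
      assert (Z : (1 + L * dl) * ((1 + L * dl) ^ j * INR j * c0) + c0 <= (1 + L * dl) ^ S j * INR (S j) * c0).
      { assert (HLd : 0 <= L * dl) by (apply Rmult_le_pos; lra).
        rewrite S_INR. simpl. assert (1 <= (1 + L * dl) * (1 + L * dl) ^ j).
        { replace 1 with (1 * 1) at 1 by ring. apply Rmult_le_compat; lra. }
        set (P := (1 + L * dl) * (1 + L * dl) ^ j) in *.
        replace ((1 + L * dl) * ((1 + L * dl) ^ j * INR j * c0) + c0) with (P * INR j * c0 + c0) by (unfold P; ring).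
        assert (P * INR j * c0 + c0 <= P * INR j * c0 + P * c0).
        { apply Rplus_le_compat_l. replace c0 with (1 * c0) at 1 by ring. apply Rmult_le_compat_r; lra. }
        lra. }
      assert (dl * Rabs (ph xs - ph ys) <= L * dl * Rabs (xs - ys)) by nra.
      assert (0 <= L * dl) by nra.
      assert (Rabs (xs - ys) * (1 + L * dl) <= (1 + L * dl) ^ j * INR j * c0 * (1 + L * dl)).
      { apply Rmult_le_compat_r; lra. }
      assert (Ec0 : c0 = 2 * K * dl ^ 2 + 2 * beta) by reflexivity. clearbody c0 xs ys xt yt. lra. }
  intros t Ht.
  set (j := int_part (t / dl)).
  assert (Sj := int_part_spec (t / dl) ltac:(apply Rdiv_le_0_compat; lra)). fold j in Sj.
  assert (Sj' : INR j * dl <= t < INR j * dl + dl).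
  { destruct Sj as [S1 S2]. split.
    - apply Rmult_le_reg_r with (/ dl); [apply Rinv_0_lt_compat; lra|].
      rewrite Rmult_assoc, Rinv_r by lra. lra.
    - apply Rmult_lt_reg_r with (/ dl); [apply Rinv_0_lt_compat; lra|].
      replace ((INR j * dl + dl) * / dl) with (INR j + 1) by (field; lra). exact S2. }
  assert (HjN : (j <= N)%nat).
  { apply INR_le. apply Rmult_le_reg_r with dl; [lra|]. lra. }
  assert (G := Grid j HjN).
  assert (Hpw : (1 + L * dl) ^ j <= exp (L * a)).
  { apply Rle_trans with (exp (INR j * (L * dl))); [apply exp_pow_le; nra|].
    apply exp_le_mono. rewrite <- HN. replace (INR j * (L * dl)) with (L * (INR j * dl)) by ring.
    apply Rmult_le_compat_l; auto. apply Rmult_le_compat_r; [lra|]. apply le_INR; auto. }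
  assert (HNj : INR j <= INR N) by (apply le_INR; auto).
  set (s := INR j * dl) in *.
  assert (Hs0 : 0 <= s) by (unfold s; apply Rmult_le_pos; [apply pos_INR|lra]).
  assert (Ex := CX s t ltac:(lra) ltac:(lra)).
  assert (Ey := CY s t ltac:(lra) ltac:(lra)).
  assert (Bx := Hph (X s) (HX s ltac:(lra))).
  assert (By := Hph (Y s) (HY s ltac:(lra))).
  assert (Htsq : (t - s) ^ 2 <= dl ^ 2) by (apply pow_incr; lra).
  assert (Ax : Rabs (X t - X s) <= M * dl + K * dl ^ 2 + beta).
  { replace (X t - X s) with ((X t - X s + (t - s) * ph (X s)) - (t - s) * ph (X s)) by ring.
    eapply Rle_trans; [apply Rabs_triang|]. rewrite Rabs_Ropp, Rabs_mult, (Rabs_pos_eq (t - s)) by lra.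
    assert ((t - s) * Rabs (ph (X s)) <= dl * M) by (apply Rmult_le_compat; try lra; apply Rabs_pos).
    nra. }
  assert (Ay : Rabs (Y t - Y s) <= M * dl + K * dl ^ 2 + beta).
  { replace (Y t - Y s) with ((Y t - Y s + (t - s) * ph (Y s)) - (t - s) * ph (Y s)) by ring.
    eapply Rle_trans; [apply Rabs_triang|]. rewrite Rabs_Ropp, Rabs_mult, (Rabs_pos_eq (t - s)) by lra.
    assert ((t - s) * Rabs (ph (Y s)) <= dl * M) by (apply Rmult_le_compat; try lra; apply Rabs_pos).
    nra. }
  assert (Gb : (1 + L * dl) ^ j * INR j * c0 <= exp (L * a) * INR N * c0).
  { apply Rmult_le_compat_r; auto. apply Rmult_le_compat; try lra. apply pow_le; nra. apply pos_INR. }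
  replace (X t - Y t) with ((X t - X s) + (X s - Y s) - (Y t - Y s)) by ring.
  assert (T1 := Rabs_triang (X t - X s + (X s - Y s)) (- (Y t - Y s))).
  assert (T2 := Rabs_triang (X t - X s) (X s - Y s)).
  rewrite Rabs_Ropp in T1. unfold c0 in *. unfold Rminus at 1. lra.
Qed.

Lemma lip_continuous (c : R -> R) (Lc : R) x : 0 <= Lc ->
  (forall x y, Rabs (c x - c y) <= Lc * Rabs (x - y)) -> continuous c x.
Proof.
  intros HL H. apply continuity_pt_filterlim.
  unfold continuity_pt, continue_in, limit1_in, limit_in. intros eps Heps.
  exists (eps / (Lc + 1)). split; [apply Rdiv_lt_0_compat; lra|].
  intros y [_ Hy]. simpl in *. unfold R_dist in *.
  eapply Rle_lt_trans; [apply H|].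
  apply Rle_lt_trans with ((Lc + 1) * Rabs (y - x)).
  - apply Rmult_le_compat_r; [apply Rabs_pos|lra].
  - apply Rmult_lt_reg_r with (/ (Lc + 1)). apply Rinv_0_lt_compat; lra.
    replace ((Lc + 1) * Rabs (y - x) * / (Lc + 1)) with (Rabs (y - x)) by (field; lra).
    exact Hy.
Qed.

Lemma quad_derive (F : R -> R) (x l C : R) : 0 <= C ->
  (forall y, Rabs (F y - F x - (y - x) * l) <= C * (y - x) ^ 2) -> is_derive F x l.
Proof.
  intros HC H. apply is_derive_Reals. intros eps Heps.
  exists (mkposreal (eps / (C + 1)) ltac:(apply Rdiv_lt_0_compat; lra)).
  intros h Hh0 Hh. simpl in Hh.
  specialize (H (x + h)). replace (x + h - x) with h in H by ring.
  replace ((F (x + h) - F x) / h - l) with ((F (x + h) - F x - h * l) / h) by (field; auto).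
  unfold Rdiv at 1. rewrite Rabs_mult, Rabs_Rinv by auto.
  assert (Hah : 0 < Rabs h) by (apply Rabs_pos_lt; auto).
  apply Rmult_lt_reg_r with (Rabs h); auto.
  rewrite Rmult_assoc, Rinv_l by lra. rewrite Rmult_1_r.
  apply Rle_lt_trans with (1 := H).
  replace (h ^ 2) with (Rabs h * Rabs h) by (rewrite <- Rabs_mult, Rabs_pos_eq by nra; ring).
  replace (C * (Rabs h * Rabs h)) with ((C * Rabs h) * Rabs h) by ring.
  apply Rmult_lt_compat_r; auto.
  apply Rle_lt_trans with ((C + 1) * Rabs h); [apply Rmult_le_compat_r; [apply Rabs_pos|lra]|].
  apply Rmult_lt_reg_r with (/ (C + 1)). apply Rinv_0_lt_compat; lra.
  replace ((C + 1) * Rabs h * / (C + 1)) with (Rabs h) by (field; lra).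
  replace (eps * / (C + 1)) with (eps / (C + 1)) by reflexivity.
  exact Hh.
Qed.

Definition clamp (T x : R) := Rmax 0 (Rmin T x).

Lemma clamp_in T x : 0 <= T -> 0 <= clamp T x <= T.
Proof. intros; unfold clamp, Rmax, Rmin; repeat destruct Rle_dec; lra. Qed.

Lemma clamp_id T x : 0 <= x <= T -> clamp T x = x.
Proof. intros; unfold clamp, Rmax, Rmin; repeat destruct Rle_dec; lra. Qed.

Lemma clamp_lip T x y : 0 <= T -> Rabs (clamp T x - clamp T y) <= Rabs (x - y).
Proof. intros; unfold clamp, Rmax, Rmin; repeat destruct Rle_dec; apply Rabs_le; split;
  unfold Rabs; destruct Rcase_abs; lra. Qed.

Lemma clamp_mono T x y : 0 <= T -> x <= y -> clamp T x <= clamp T y.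
Proof. intros; unfold clamp, Rmax, Rmin; repeat destruct Rle_dec; lra. Qed.

Lemma clamp_prop T x y : 0 <= T -> x <= y -> Rabs (y - clamp T y) <= y - x \/ clamp T y = clamp T x.
Proof. intros; unfold clamp, Rmax, Rmin; repeat destruct Rle_dec;
  first [right; lra | left; apply Rabs_le; lra]. Qed.

Lemma ftc_est (f c : R -> R) (T K Lc : R) : 0 <= T -> 0 <= K -> 0 <= Lc ->
  (forall s t, 0 <= s <= t -> t <= T -> Rabs (f t - f s - (t - s) * c s) <= K * (t - s) ^ 2) ->
  (forall x y, 0 <= x <= T -> 0 <= y <= T -> Rabs (c x - c y) <= Lc * Rabs (x - y)) ->
  is_RInt c 0 T (f T - f 0).
Proof.
  intros HT HK HL Hf Hc.
  set (ct := fun x => c (clamp T x)).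
  set (ft := fun x => f (clamp T x) + (x - clamp T x) * c (clamp T x)).
  assert (Hct : forall x y, Rabs (ct x - ct y) <= Lc * Rabs (x - y)).
  { intros x y; unfold ct. eapply Rle_trans; [apply Hc; apply clamp_in; auto|].
    apply Rmult_le_compat_l; auto. apply clamp_lip; auto. }
  assert (Key1 : forall x y, x <= y -> Rabs (ft y - ft x - (y - x) * ct x) <= (K + Lc) * (y - x) ^ 2).
  { intros x y Hxy. unfold ft, ct.
    set (s' := clamp T x). set (t' := clamp T y).
    assert (Hs' := clamp_in T x HT). assert (Ht' := clamp_in T y HT). fold s' in Hs'. fold t' in Ht'.
    assert (Hst : s' <= t') by (apply clamp_mono; auto).
    assert (E := Hf s' t' ltac:(lra) ltac:(lra)).
    assert (Hl : Rabs (t' - s') <= Rabs (y - x)) by (apply clamp_lip; auto).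
    replace (f t' + (y - t') * c t' - (f s' + (x - s') * c s') - (y - x) * c s')
      with ((f t' - f s' - (t' - s') * c s') + (y - t') * (c t' - c s')) by ring.
    eapply Rle_trans; [apply Rabs_triang|].
    assert (Q : Rabs ((y - t') * (c t' - c s')) <= Lc * (y - x) ^ 2).
    { rewrite Rabs_mult. destruct (clamp_prop T x y HT Hxy) as [P|P]; fold t' s' in P.
      - assert (Rabs (c t' - c s') <= Lc * Rabs (y - x)).
        { eapply Rle_trans; [apply Hc; split; lra|]. apply Rmult_le_compat_l; auto. }
        rewrite (Rabs_pos_eq (y - x)) in H by lra.
        replace (Lc * (y - x) ^ 2) with ((y - x) * (Lc * (y - x))) by ring.
        apply Rmult_le_compat; try apply Rabs_pos; auto.
      - rewrite P. unfold Rminus at 2. rewrite Rplus_opp_r, Rabs_R0, Rmult_0_r.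
        apply Rmult_le_pos; auto. apply pow2_ge_0. }
    assert ((t' - s') ^ 2 <= (y - x) ^ 2).
    { rewrite <- (Rabs_pos_eq (t' - s')) by lra. rewrite <- (Rabs_pos_eq (y - x)) by lra.
      apply pow_incr; split; [apply Rabs_pos| rewrite !Rabs_pos_eq in Hl |- *; lra]. }
    assert (K * (t' - s') ^ 2 <= K * (y - x) ^ 2) by (apply Rmult_le_compat_l; auto).
    lra. }
  assert (Key : forall x y, Rabs (ft y - ft x - (y - x) * ct x) <= (K + 2 * Lc) * (y - x) ^ 2).
  { intros x y. destruct (Rle_dec x y) as [Hxy|Hxy].
    - eapply Rle_trans; [apply Key1; auto|]. apply Rmult_le_compat_r; [apply pow2_ge_0|lra].
    - assert (Hyx : y <= x) by lra. assert (A := Key1 y x Hyx).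
      replace (ft y - ft x - (y - x) * ct x) with (- (ft x - ft y - (x - y) * ct y) + (x - y) * (ct x - ct y)) by ring.
      eapply Rle_trans; [apply Rabs_triang|]. rewrite Rabs_Ropp, Rabs_mult.
      assert (B := Hct x y). rewrite (Rabs_pos_eq (x - y)) in B |- * by lra.
      assert ((x - y) * Rabs (ct x - ct y) <= Lc * (y - x) ^ 2).
      { replace (Lc * (y - x) ^ 2) with ((x - y) * (Lc * (x - y))) by ring.
        apply Rmult_le_compat_l; lra. }
      replace ((x - y) ^ 2) with ((y - x) ^ 2) in A by ring. nra. }
  assert (D := is_RInt_derive ft ct 0 T
     (fun x _ => quad_derive ft x (ct x) (K + 2 * Lc) ltac:(lra) (Key x))
     (fun x _ => lip_continuous ct Lc x HL Hct)).
  assert (E1 : ft T = f T) by (unfold ft; rewrite clamp_id by lra; ring).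
  assert (E0 : ft 0 = f 0) by (unfold ft; rewrite clamp_id by lra; ring).
  rewrite E1, E0 in D.
  apply is_RInt_ext with ct; [|exact D].
  intros x Hx. unfold ct. rewrite Rmin_left, Rmax_right in Hx by lra. rewrite clamp_id by lra. auto.
Qed.

Definition Hyps (gam : nat -> R) (g : nat -> R -> R) (phi : R -> R) : Prop :=
  (forall k, (1 <= k)%nat -> 0 < gam k) /\
  (forall M, exists N, forall k, (N <= k)%nat -> M < gam k) /\
  (forall k, (1 <= k)%nat -> is_pgf (g k)) /\
  (forall a, 0 <= a -> exists L, forall k, (1 <= k)%nat ->
            forall x y, 0 <= x <= a -> 0 <= y <= a ->
              Rabs (Gk gam g k x - Gk gam g k y) <= L * Rabs (x - y)) /\
  (forall a, 0 <= a -> forall eps, 0 < eps -> exists N,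
            forall k, (1 <= k)%nat -> (N <= k)%nat ->
              forall z, 0 <= z <= a -> Rabs (Gk gam g k z - phi z) < eps).

Lemma le_eps (x y C : R) : 0 <= C -> (forall b, 0 < b -> x <= y + C * b) -> x <= y.
Proof.
  intros HC H. destruct (Rle_dec x y) as [|Hn]; auto.
  assert (Hb : 0 < (x - y) / (2 * (C + 1))) by (apply Rdiv_lt_0_compat; lra).
  specialize (H _ Hb).
  assert (C * ((x - y) / (2 * (C + 1))) < x - y).
  { replace (C * ((x - y) / (2 * (C + 1)))) with ((x - y) * (C / (2 * (C + 1)))) by (field; lra).
    assert (C / (2 * (C + 1)) < 1).
    { apply Rmult_lt_reg_r with (2 * (C + 1)); [lra|]. unfold Rdiv; rewrite Rmult_assoc, Rinv_l by lra. lra. }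
    assert (0 <= C / (2 * (C + 1))) by (apply Rdiv_le_0_compat; lra). nra. }
  lra.
Qed.

Lemma abs3 a b c : Rabs (a - b + c) <= Rabs a + Rabs b + Rabs c.
Proof.
  assert (T1 := Rabs_triang (a - b) c). assert (T2 := Rabs_triang a (- b)).
  rewrite Rabs_Ropp in T2. unfold Rminus in *. lra.
Qed.

Lemma G0 gam g phi : Hyps gam g phi -> forall k, (1 <= k)%nat -> Gk gam g k 0 = 0.
Proof.
  intros [_ [_ [Hp _]]] k Hk. unfold Gk.
  replace (- 0 / INR k) with 0 by (unfold Rdiv; ring). rewrite exp_0.
  destruct (pgf_props _ (Hp k Hk)) as [H1 _]. rewrite H1. ring.
Qed.

Lemma phi_props gam g phi : Hyps gam g phi -> forall b, 0 <= b -> exists L, 0 <= L /\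
  (forall k, (1 <= k)%nat -> forall x y, 0 <= x <= b -> 0 <= y <= b ->
     Rabs (Gk gam g k x - Gk gam g k y) <= L * Rabs (x - y)) /\
  (forall x y, 0 <= x <= b -> 0 <= y <= b -> Rabs (phi x - phi y) <= L * Rabs (x - y)) /\
  phi 0 = 0.
Proof.
  intros HH b Hb. destruct HH as (H1 & H2 & H3 & H4 & H5).
  destruct (H4 b Hb) as [L0 HL0].
  exists (Rmax 0 L0). split; [apply Rmax_l|].
  assert (HLk : forall k, (1 <= k)%nat -> forall x y, 0 <= x <= b -> 0 <= y <= b ->
     Rabs (Gk gam g k x - Gk gam g k y) <= Rmax 0 L0 * Rabs (x - y)).
  { intros k Hk x y Hx Hy. eapply Rle_trans; [apply HL0; auto|].
    apply Rmult_le_compat_r; [apply Rabs_pos| apply Rmax_r]. }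
  split; [exact HLk|split].
  - intros x y Hx Hy. apply le_eps with 2; [lra|]. intros e He.
    destruct (H5 b Hb e He) as [N HN].
    set (k := Nat.max 1 N).
    assert (A := HN k (Nat.le_max_l 1 N) (Nat.le_max_r 1 N) x Hx). assert (B := HN k (Nat.le_max_l 1 N) (Nat.le_max_r 1 N) y Hy).
    assert (C := HLk k (Nat.le_max_l 1 N) x y Hx Hy).
    replace (phi x - phi y) with ((Gk gam g k x - Gk gam g k y) - (Gk gam g k x - phi x) + (Gk gam g k y - phi y)) by ring.
    assert (T := abs3 (Gk gam g k x - Gk gam g k y) (Gk gam g k x - phi x) (Gk gam g k y - phi y)).
    lra.
  - assert (Habs : Rabs (phi 0) <= 0).
    { apply le_eps with 1; [lra|]. intros e He.
      destruct (H5 b Hb e He) as [N HN].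
      set (k := Nat.max 1 N).
      assert (A := HN k (Nat.le_max_l 1 N) (Nat.le_max_r 1 N) 0 ltac:(lra)).
      rewrite (G0 gam g phi (conj H1 (conj H2 (conj H3 (conj H4 H5)))) k (Nat.le_max_l 1 N)) in A.
      replace (0 - phi 0) with (- phi 0) in A by ring. rewrite Rabs_Ropp in A. lra. }
    assert (X := Rabs_pos (phi 0)).
    destruct (Req_dec (phi 0) 0) as [|Hn]; auto. apply Rabs_no_R0 in Hn. lra.
Qed.

Lemma int_part_0 : int_part 0 = 0%nat.
Proof.
  assert (A := int_part_spec 0 ltac:(lra)).
  destruct (int_part 0) as [|n]; auto. rewrite S_INR in A. assert (X := pos_INR n). lra.
Qed.

Lemma scheme_props gam g phi : Hyps gam g phi -> forall a, 0 <= a -> exists B L M,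
  0 <= B /\ 0 <= L /\ 0 <= M /\
  (forall x y, 0 <= x <= B -> 0 <= y <= B -> Rabs (phi x - phi y) <= L * Rabs (x - y)) /\
  (forall x, 0 <= x <= B -> Rabs (phi x) <= M) /\
  forall beta, 0 < beta -> exists N, forall k, (1 <= k)%nat -> (N <= k)%nat ->
    forall lam, 0 <= lam <= a ->
      vk gam g k 0 lam = lam /\
      (forall t, 0 <= t <= a -> 0 <= vk gam g k t lam <= B) /\
      (forall s t, 0 <= s <= t -> t <= a ->
         Rabs (vk gam g k t lam - vk gam g k s lam + (t - s) * phi (vk gam g k s lam))
           <= 2 * L * (M + 1) * (t - s) ^ 2 + beta).
Proof.
  intros HH a Ha. pose proof HH as (H1 & H2 & H3 & H4 & H5).
  destruct (phi_props _ _ _ HH 1 ltac:(lra)) as [L1 [HL1 [HG1 _]]].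
  set (D := (a + 1) * exp (2 * L1 * a)).
  assert (HD : 1 <= D).
  { unfold D. assert (X := exp_ineq1_le (2 * L1 * a)). assert (0 <= 2 * L1 * a) by nra. nra. }
  set (B := 2 * D).
  destruct (phi_props _ _ _ HH B ltac:(unfold B; lra)) as [L [HL [HGL [HphL Hph0]]]].
  set (M := L * B).
  assert (HM : 0 <= M) by (unfold M, B; nra).
  assert (Hphb : forall x, 0 <= x <= B -> Rabs (phi x) <= M).
  { intros x Hx. assert (X := HphL x 0 Hx ltac:(unfold B; lra)). rewrite Hph0, Rminus_0_r, Rminus_0_r in X.
    rewrite (Rabs_pos_eq x) in X by lra. unfold M. nra. }
  exists B, L, M. split; [unfold B; lra|]. split; [exact HL|]. split; [exact HM|].
  split; [exact HphL|]. split; [exact Hphb|].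
  intros beta Hbeta.
  set (eta := Rmin 1 (beta / (3 * (a + 1)))).
  assert (Heta : 0 < eta <= 1 /\ (a + 1) * eta <= beta / 3).
  { unfold eta. assert (0 < beta / (3 * (a + 1))) by (apply Rdiv_lt_0_compat; lra).
    split; [split; [apply Rmin_glb_lt; lra| apply Rmin_l]|].
    apply Rle_trans with ((a + 1) * (beta / (3 * (a + 1)))).
    - apply Rmult_le_compat_l; [lra| apply Rmin_r].
    - right; field; lra. }
  destruct (H5 B ltac:(unfold B; lra) (eta / 3) ltac:(lra)) as [N1 HN1].
  set (G0' := 3 * (2 * L * (M + 1) + M) / beta + 1).
  destruct (H2 G0') as [N2 HN2].
  destruct (INR_unbounded (24 * M ^ 2 / eta + 6 * M * D / eta + 2 * D + 4 * M + 1)) as [N3 HN3].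
  exists (Nat.max N1 (Nat.max N2 N3)).
  intros k Hk HkN lam Hlam.
  set (kk := INR k). set (gm := gam k).
  assert (Hkk : INR N3 <= kk) by (apply le_INR; lia).
  assert (Hgm : G0' < gm) by (apply HN2; lia).
  assert (HG0' : 1 <= G0').
  { unfold G0'. assert (0 <= 3 * (2 * L * (M + 1) + M) / beta) by (apply Rdiv_le_0_compat; nra). lra. }
  assert (Hm1 : 0 <= 24 * M ^ 2 / eta) by (apply Rdiv_le_0_compat; nra).
  assert (Hm2 : 0 <= 6 * M * D / eta) by (apply Rdiv_le_0_compat; nra).
  assert (Hkk1 : 1 <= kk) by lra.
  destruct (pgf_props _ (H3 k Hk)) as [Hg1 [Hg01 Hcv]].
  assert (HGw : forall w, 0 <= w <= 1 ->
     Rabs (kk * gm * (g k (exp (- w / kk)) - exp (- w / kk))) <= L1 * w).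
  { intros w Hw. assert (X := HG1 k Hk w 0 Hw ltac:(lra)).
    rewrite (G0 _ _ _ HH k Hk), Rminus_0_r, Rminus_0_r, (Rabs_pos_eq w) in X by lra. exact X. }
  assert (Hgr := growth (g k) kk gm L1 Hkk1 ltac:(lra) HL1 Hg01 Hg1 Hcv HGw).
  set (s0 := exp (- lam / kk)).
  assert (Hs0 : 0 < s0 <= 1 /\ 1 - s0 <= lam / kk).
  { unfold s0. split; [split; [apply exp_pos|]|].
    - rewrite <- exp_0. apply exp_le_mono.
      assert (0 <= lam / kk) by (apply Rdiv_le_0_compat; lra). unfold Rdiv in *; lra.
    - assert (X := exp_ineq1_le (- lam / kk)). unfold Rdiv in *; lra. }
  set (s := fun n => iter_fun n (g k) s0).
  set (nu := 1 + 2 * L1 / gm).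
  assert (F1 : forall n, 0 <= s n <= 1 /\ 1 - s n <= nu ^ n * (1 - s0)).
  { induction n.
    - simpl. unfold s; simpl. lra.
    - destruct IHn as [I1 I2]. assert (Es : s (S n) = g k (s n)) by reflexivity.
      rewrite Es. split; [apply Hg01; auto|].
      apply Rle_trans with (1 := Hgr (s n) I1). simpl.
      assert (0 <= nu) by (unfold nu; assert (0 <= 2 * L1 / gm) by (apply Rdiv_le_0_compat; lra); lra).
      rewrite Rmult_assoc. apply Rmult_le_compat_l; auto. }
  set (Nmax := int_part (gm * a)).
  assert (HNmax : INR Nmax <= gm * a) by (apply int_part_spec; nra).
  assert (F2 : forall n, (n <= Nmax)%nat -> 1 - s n <= D / kk).
  { intros n Hn. destruct (F1 n) as [_ X]. apply Rle_trans with (1 := X).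
    assert (Hnu : nu ^ n <= exp (2 * L1 * a)).
    { apply Rle_trans with (exp (INR n * (2 * L1 / gm))).
      - apply exp_pow_le. apply Rdiv_le_0_compat; lra.
      - apply exp_le_mono. assert (INR n <= gm * a) by (apply Rle_trans with (INR Nmax); auto; apply le_INR; auto).
        replace (INR n * (2 * L1 / gm)) with (2 * L1 * (INR n / gm)) by (field; lra).
        apply Rmult_le_compat_l; [lra|]. apply Rmult_le_reg_r with gm; [lra|].
        unfold Rdiv; rewrite Rmult_assoc, Rinv_l by lra. lra. }
    unfold D. replace ((a + 1) * exp (2 * L1 * a) / kk) with (exp (2 * L1 * a) * ((a + 1) / kk)) by (field; lra).
    apply Rmult_le_compat; try lra. apply pow_le. unfold nu. assert (0 <= 2 * L1 / gm) by (apply Rdiv_le_0_compat; lra); lra.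
    apply Rle_trans with (lam / kk); [lra|]. unfold Rdiv; apply Rmult_le_compat_r; [left; apply Rinv_0_lt_compat; lra| lra]. }
  set (u := fun n => - kk * ln (s n)).
  assert (HDk : D / kk <= 1 / 2).
  { apply Rmult_le_reg_r with kk; [lra|]. unfold Rdiv; rewrite Rmult_assoc, Rinv_l by lra. lra. }
  assert (F3 : forall n, (n <= Nmax)%nat -> 1/2 <= s n /\ 0 <= u n <= B).
  { intros n Hn. assert (X := F2 n Hn). destruct (F1 n) as [Y _].
    assert (Hs : 1/2 <= s n) by lra. split; auto. unfold u.
    assert (Hln : ln (s n) <= 0) by (rewrite <- ln_1; apply ln_le; lra).
    assert (Hln2 : - ln (s n) <= 2 * (1 - s n)).
    { rewrite <- ln_Rinv by lra. eapply Rle_trans; [apply ln_le_xm1; apply Rinv_0_lt_compat; lra|].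
      replace (/ s n - 1) with ((1 - s n) / s n) by (field; lra).
      apply Rmult_le_reg_r with (s n); [lra|]. unfold Rdiv; rewrite Rmult_assoc, Rinv_l by lra. nra. }
    split; [nra|]. unfold B.
    assert (kk * (1 - s n) <= D).
    { apply Rmult_le_reg_r with (/ kk). apply Rinv_0_lt_compat; lra.
      replace (kk * (1 - s n) * / kk) with (1 - s n) by (field; lra). exact X. }
    nra. }
  assert (F4 : forall n, (n <= Nmax)%nat -> exp (- u n / kk) = s n).
  { intros n Hn. unfold u. replace (- (- kk * ln (s n)) / kk) with (ln (s n)) by (field; lra).
    apply exp_ln. destruct (F3 n Hn); lra. }
  assert (F5 : forall n, (n < Nmax)%nat -> Rabs (gm * (u (S n) - u n) + phi (u n)) <= eta).
  { intros n Hn. destruct (F3 n ltac:(lia)) as [Hs Hu]. destruct (F1 n) as [Hs1 _].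
    assert (EG : kk * gm * (s (S n) - s n) = Gk gam g k (u n)).
    { unfold Gk. fold kk gm. rewrite (F4 n ltac:(lia)). reflexivity. }
    assert (HGb : Rabs (kk * gm * (s (S n) - s n)) <= M).
    { rewrite EG. assert (X := HGL k Hk (u n) 0 Hu ltac:(unfold B; lra)).
      rewrite (G0 _ _ _ HH k Hk), !Rminus_0_r, (Rabs_pos_eq (u n)) in X by lra.
      unfold M. nra. }
    assert (HGc : Rabs (kk * gm * (s (S n) - s n) - phi (u n)) <= eta / 3).
    { rewrite EG. left. apply HN1; auto. lia. }
    destruct (step_est kk gm (s n) (s (S n)) M (eta / 3) (phi (u n)) D Hkk1 ltac:(lra)
       ltac:(lra) (F2 n ltac:(lia)) HM ltac:(nra) HGb HGc) as [_ St].
    unfold u. eapply Rle_trans; [exact St|].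
    assert (8 * M ^ 2 / (kk * gm) <= eta / 3).
    { apply Rmult_le_reg_r with (kk * gm); [nra|]. unfold Rdiv; rewrite Rmult_assoc, Rinv_l by nra.
      assert (24 * M ^ 2 <= eta * kk).
      { assert (24 * M ^ 2 / eta <= kk) by lra.
        apply Rmult_le_reg_r with (/ eta). apply Rinv_0_lt_compat; lra.
        replace (eta * kk * / eta) with kk by (field; lra). exact H. }
      assert (0 <= eta * kk * (gm - 1)) by (apply Rmult_le_pos; nra).
      nra. }
    assert (2 * M * D / kk <= eta / 3).
    { apply Rmult_le_reg_r with kk; [lra|]. unfold Rdiv; rewrite Rmult_assoc, Rinv_l by lra.
      assert (6 * M * D <= eta * kk).
      { assert (6 * M * D / eta <= kk) by lra.
        apply Rmult_le_reg_r with (/ eta). apply Rinv_0_lt_compat; lra.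
        replace (eta * kk * / eta) with kk by (field; lra). exact H0. }
      nra. }
    lra. }
  assert (Hgm1 : 1 <= gm) by lra.
  assert (W := W_cons u phi gm eta L M B a Hgm1 ltac:(lra) HL HM Ha (fun n Hn => proj2 (F3 n Hn)) HphL Hphb F5).
  assert (Evk : forall t, vk gam g k t lam = u (int_part (gm * t))) by reflexivity.
  split; [|split].
  - rewrite Evk, Rmult_0_r, int_part_0. unfold u, s. simpl. unfold s0. rewrite ln_exp. field. lra.
  - intros t Ht. rewrite Evk. apply F3. apply int_part_mono. nra.
  - intros s' t Hst Hta. rewrite !Evk. eapply Rle_trans; [apply W; auto|].
    apply Rplus_le_compat_l.
    assert (2 * L * (M + 1) / (gm * gm) + M / gm <= 2 * beta / 3).
    { assert (E : 2 * L * (M + 1) / (gm * gm) <= 2 * L * (M + 1) / gm).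
      { unfold Rdiv. apply Rmult_le_compat_l; [nra|]. apply Rinv_le_contravar; nra. }
      assert (E2 : (2 * L * (M + 1) + M) / gm <= 2 * beta / 3).
      { apply Rmult_le_reg_r with gm; [lra|]. unfold Rdiv at 1; rewrite Rmult_assoc, Rinv_l by lra.
        rewrite Rmult_1_r.
        assert (3 * (2 * L * (M + 1) + M) / beta <= gm) by (unfold G0' in Hgm; lra).
        assert (3 * (2 * L * (M + 1) + M) <= beta * gm).
        { apply Rmult_le_reg_r with (/ beta). apply Rinv_0_lt_compat; lra.
          replace (beta * gm * / beta) with gm by (field; lra). exact H. }
        nra. }
      replace ((2 * L * (M + 1) + M) / gm) with (2 * L * (M + 1) / gm + M / gm) in E2 by (field; lra).
      lra. }
    lra.
Qed.

Lemma cauchy gam g phi : Hyps gam g phi -> forall a, 0 <= a -> forall eps, 0 < eps ->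
  exists N, forall k m, (1 <= k)%nat -> (1 <= m)%nat -> (N <= k)%nat -> (N <= m)%nat ->
    forall t lam, 0 <= t <= a -> 0 <= lam <= a ->
      Rabs (vk gam g k t lam - vk gam g m t lam) <= eps.
Proof.
  intros HH a Ha eps Heps.
  set (A := a + 1).
  destruct (scheme_props _ _ _ HH A ltac:(unfold A; lra)) as (B & L & M & HB & HL & HM & HphL & Hphb & Hsch).
  set (K := 2 * L * (M + 1)).
  assert (HK : 0 <= K) by (unfold K; nra).
  set (E := exp (L * A)).
  assert (HE : 0 < E) by apply exp_pos.
  set (Cst := 2 * E * K * A ^ 2 + 2 * M * A + 2 * K * A ^ 2).
  assert (HA0 : 0 < A) by (unfold A; lra).
  assert (HC : 0 <= Cst).
  { unfold Cst. assert (h1 : 0 <= A^2) by apply pow2_ge_0.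
    assert (h2 : 0 <= E * K) by nra. assert (0 <= E * K * A ^ 2) by nra.
    assert (0 <= M * A) by nra. assert (0 <= K * A^2) by nra. nra. }
  destruct (INR_unbounded (2 * Cst / eps + 1)) as [N' HN'].
  assert (Hn0 : 2 * Cst / eps >= 0) by (apply Rle_ge, Rdiv_le_0_compat; lra).
  set (n := INR N') in *.
  assert (Hn1 : 1 < n) by lra.
  set (dl := A / n).
  set (beta := eps / (2 * (2 * E * n + 2))).
  assert (Hbeta : 0 < beta) by (unfold beta; apply Rdiv_lt_0_compat; nra).
  destruct (Hsch beta Hbeta) as [N HN].
  exists N. intros k m Hk Hm HNk HNm t lam Ht Hlam.
  destruct (HN k Hk HNk lam ltac:(unfold A; split; lra)) as (X0 & XB & XQ).
  destruct (HN m Hm HNm lam ltac:(unfold A; split; lra)) as (Y0 & YB & YQ).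
  assert (HA : 0 < A) by (unfold A; lra).
  assert (Hdl : 0 < dl) by (unfold dl; apply Rdiv_lt_0_compat; lra).
  assert (Hb0 : 0 <= beta) by lra.
  assert (HNd : INR N' * dl = A) by (unfold dl; fold n; field; lra).
  assert (H00 : vk gam g k 0 lam = vk gam g m 0 lam) by (rewrite X0, Y0; auto).
  assert (HtA : 0 <= t <= A) by (unfold A; split; lra).
  assert (St := stab phi A B L M K beta dl N' (fun t => vk gam g k t lam) (fun t => vk gam g m t lam)
     HL HM HK Hb0 Hdl HNd HphL Hphb XB YB H00 XQ YQ t HtA).
  cbv beta in St. eapply Rle_trans; [exact St|]. fold n E.
  assert (Eq : E * n * (2 * K * dl ^ 2 + 2 * beta) + 2 * (M * dl + K * dl ^ 2 + beta)
     = (2 * E * K * A ^ 2 + 2 * M * A) / n + 2 * K * A ^ 2 / (n * n) + beta * (2 * E * n + 2))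
     by (unfold dl; field; lra).
  rewrite Eq.
  assert (Hb : beta * (2 * E * n + 2) = eps / 2) by (unfold beta; field; nra).
  assert (H2 : 2 * K * A ^ 2 / (n * n) <= 2 * K * A ^ 2 / n).
  { unfold Rdiv. apply Rmult_le_compat_l; [assert (0 <= A^2) by apply pow2_ge_0; nra|].
    apply Rinv_le_contravar; nra. }
  assert (H3 : Cst / n <= eps / 2).
  { apply Rmult_le_reg_r with n; [lra|]. unfold Rdiv; rewrite Rmult_assoc, Rinv_l by lra.
    assert (2 * Cst / eps <= n) by lra.
    assert (2 * Cst <= eps * n).
    { apply Rmult_le_reg_r with (/ eps). apply Rinv_0_lt_compat; lra.
      replace (eps * n * / eps) with n by (field; lra). exact H. }
    nra. }
  unfold Cst in H3.
  replace ((2 * E * K * A ^ 2 + 2 * M * A + 2 * K * A ^ 2) / n) with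
    ((2 * E * K * A ^ 2 + 2 * M * A) / n + 2 * K * A ^ 2 / n) in H3 by (field; lra).
  lra.
Qed.

Lemma lim_close (u : nat -> R) (l x e : R) (N : nat) : is_lim_seq u l ->
  (forall m, (N <= m)%nat -> Rabs (x - u m) <= e) -> Rabs (x - l) <= e.
Proof.
  intros Hl H. apply le_eps with 1; [lra|]. intros b Hb.
  apply is_lim_seq_spec in Hl. destruct (Hl (mkposreal b Hb)) as [N' HN']. simpl in HN'.
  set (n := Nat.max N N').
  assert (A := H n (Nat.le_max_l _ _)). assert (B := HN' n (Nat.le_max_r _ _)).
  replace (x - l) with ((x - u n) + (u n - l)) by ring.
  eapply Rle_trans; [apply Rabs_triang|]. lra.
Qed.

Definition vlim gam g t lam := real (Lim_seq (fun k => vk gam g k t lam)).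

Lemma lim_exists gam g phi : Hyps gam g phi -> forall t lam, 0 <= t -> 0 <= lam ->
  is_lim_seq (fun k => vk gam g k t lam) (vlim gam g t lam).
Proof.
  intros HH t lam Ht Hlam.
  set (u := fun k => vk gam g k t lam).
  assert (Hc : ex_lim_seq_cauchy u).
  { intros [e He]. simpl.
    destruct (cauchy _ _ _ HH (Rmax t lam) ltac:(apply Rle_trans with t; [lra| apply Rmax_l]) (e / 2) ltac:(lra)) as [N HN].
    exists (Nat.max N 1). intros n m Hn Hm. unfold u.
    eapply Rle_lt_trans; [apply HN; try lia|lra].
    split; [lra| apply Rmax_l]. split; [lra| apply Rmax_r]. }
  apply ex_lim_seq_cauchy_corr in Hc. destruct Hc as [l Hl].
  unfold vlim. fold u. rewrite (is_lim_seq_unique u l Hl). simpl. exact Hl.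
Qed.

Lemma unif_conv gam g phi : Hyps gam g phi -> forall a, 0 <= a -> forall eps, 0 < eps ->
  exists N, forall k, (1 <= k)%nat -> (N <= k)%nat ->
    forall t lam, 0 <= t <= a -> 0 <= lam <= a -> Rabs (vk gam g k t lam - vlim gam g t lam) <= eps.
Proof.
  intros HH a Ha eps Heps.
  destruct (cauchy _ _ _ HH a Ha eps Heps) as [N HN].
  exists (Nat.max N 1). intros k Hk HNk t lam Ht Hlam.
  apply (lim_close (fun m => vk gam g m t lam) _ _ _ (Nat.max N 1)).
  - apply (lim_exists _ _ _ HH); lra.
  - intros m Hm. apply HN; auto; lia.
Qed.

Lemma abs4p a b c d : Rabs (a + b - c + d) <= Rabs a + Rabs b + Rabs c + Rabs d.
Proof.
  assert (T1 := Rabs_triang (a + b - c) d).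
  assert (T2 := Rabs_triang (a + b) (- c)).
  assert (T3 := Rabs_triang a b).
  rewrite Rabs_Ropp in T2. unfold Rminus in *. lra.
Qed.

Lemma v_props gam g phi : Hyps gam g phi -> forall A, 0 <= A -> exists B L M,
  0 <= B /\ 0 <= L /\ 0 <= M /\
  (forall x y, 0 <= x <= B -> 0 <= y <= B -> Rabs (phi x - phi y) <= L * Rabs (x - y)) /\
  (forall x, 0 <= x <= B -> Rabs (phi x) <= M) /\
  forall lam, 0 <= lam <= A ->
    vlim gam g 0 lam = lam /\
    (forall t, 0 <= t <= A -> 0 <= vlim gam g t lam <= B) /\
    (forall s t, 0 <= s <= t -> t <= A ->
       Rabs (vlim gam g t lam - vlim gam g s lam + (t - s) * phi (vlim gam g s lam))
         <= 2 * L * (M + 1) * (t - s) ^ 2).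
Proof.
  intros HH A HA.
  destruct (scheme_props _ _ _ HH A HA) as (B & L & M & HB & HL & HM & HphL & Hphb & Hsch).
  exists B, L, M. do 5 (split; [assumption|]).
  intros lam Hlam.
  assert (V0 : vlim gam g 0 lam = lam).
  { destruct (Hsch 1 ltac:(lra)) as [N HN].
    assert (X := lim_close (fun k => vk gam g k 0 lam) (vlim gam g 0 lam) lam 0 (Nat.max N 1)
      (lim_exists _ _ _ HH 0 lam ltac:(lra) ltac:(lra))).
    assert (Rabs (lam - vlim gam g 0 lam) <= 0).
    { apply X. intros m Hm. destruct (HN m ltac:(lia) ltac:(lia) lam Hlam) as [E _].
      rewrite E. unfold Rminus; rewrite Rplus_opp_r, Rabs_R0. lra. }
    assert (Y := Rabs_pos (lam - vlim gam g 0 lam)).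
    destruct (Req_dec (lam - vlim gam g 0 lam) 0) as [Z|Z].
    - lra.
    - apply Rabs_no_R0 in Z. lra. }
  assert (VB : forall t, 0 <= t <= A -> 0 <= vlim gam g t lam <= B).
  { intros t Ht.
    assert (P : forall b, 0 < b -> - b <= vlim gam g t lam <= B + b).
    { intros b Hb. destruct (Hsch 1 ltac:(lra)) as [N HN].
      destruct (unif_conv _ _ _ HH A HA b Hb) as [N' HN'].
      set (k := Nat.max 1 (Nat.max N N')).
      destruct (HN k ltac:(lia) ltac:(lia) lam Hlam) as [_ [Bd _]].
      assert (Z := HN' k ltac:(lia) ltac:(lia) t lam Ht Hlam).
      assert (W := Bd t Ht). apply Rabs_le_between in Z. lra. }
    split.
    - apply le_eps with 1; [lra|]. intros b Hb. assert (X := P b Hb). lra.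
    - apply le_eps with 1; [lra|]. intros b Hb. assert (X := P b Hb). lra. }
  split; [exact V0|]. split; [exact VB|].
  intros s t Hst HtA.
  apply le_eps with (3 + A * L); [nra|]. intros b Hb.
  destruct (Hsch b Hb) as [N HN].
  destruct (unif_conv _ _ _ HH A HA b Hb) as [N' HN'].
  set (k := Nat.max 1 (Nat.max N N')).
  destruct (HN k ltac:(lia) ltac:(lia) lam Hlam) as [_ [Bd Q]].
  assert (Zt := HN' k ltac:(lia) ltac:(lia) t lam ltac:(split; lra) Hlam).
  assert (Zs := HN' k ltac:(lia) ltac:(lia) s lam ltac:(split; lra) Hlam).
  assert (Qk := Q s t Hst HtA).
  set (xs := vk gam g k s lam) in *. set (xt := vk gam g k t lam) in *.
  set (ys := vlim gam g s lam) in *. set (yt := vlim gam g t lam) in *.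
  assert (Lp := HphL ys xs (VB s ltac:(split; lra)) (Bd s ltac:(split; lra))).
  replace (yt - ys + (t - s) * phi ys) with
    ((xt - xs + (t - s) * phi xs) + (yt - xt) - (ys - xs) + (t - s) * (phi ys - phi xs)) by ring.
  eapply Rle_trans; [apply abs4p|].
  rewrite Rabs_mult, (Rabs_pos_eq (t - s)) by lra.
  rewrite Rabs_minus_sym in Zt, Zs.
  assert ((t - s) * Rabs (phi ys - phi xs) <= A * (L * b)).
  { apply Rmult_le_compat; try lra; try apply Rabs_pos.
    eapply Rle_trans; [exact Lp|]. apply Rmult_le_compat_l; auto. }
  lra.
Qed.

Theorem theorem2p1p6 (gam : nat -> R) (g : nat -> R -> R) (phi : R -> R)
  (Hgam_pos : forall k, (1 <= k)%nat -> 0 < gam k)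
  (Hgam_inf : forall M, exists N, forall k, (N <= k)%nat -> M < gam k)
  (Hpgf : forall k, (1 <= k)%nat -> is_pgf (g k))
  (Hlip : forall a, 0 <= a -> exists L, forall k, (1 <= k)%nat ->
            forall x y, 0 <= x <= a -> 0 <= y <= a ->
              Rabs (Gk gam g k x - Gk gam g k y) <= L * Rabs (x - y))
  (Hconv : forall a, 0 <= a -> forall eps, 0 < eps -> exists N,
            forall k, (1 <= k)%nat -> (N <= k)%nat ->
              forall z, 0 <= z <= a -> Rabs (Gk gam g k z - phi z) < eps) :
  exists v : R -> R -> R,
    (forall a, 0 <= a -> forall eps, 0 < eps -> exists N,
       forall k, (1 <= k)%nat -> (N <= k)%nat ->
         forall t lam, 0 <= t <= a -> 0 <= lam <= a ->
           Rabs (vk gam g k t lam - v t lam) < eps) /\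
    (forall t lam, 0 <= t -> 0 <= lam ->
       is_RInt (fun s => phi (v s lam)) 0 t (lam - v t lam)).
Proof.
  assert (HH : Hyps gam g phi) by (repeat split; assumption).
  exists (vlim gam g). split.
  - intros a Ha eps Heps.
    destruct (unif_conv _ _ _ HH a Ha (eps / 2) ltac:(lra)) as [N HN].
    exists N. intros k Hk HNk t lam Ht Hlam.
    eapply Rle_lt_trans; [apply HN; auto|lra].
  - intros t lam Ht Hlam.
    set (A := Rmax t lam).
    assert (HtA : t <= A) by apply Rmax_l. assert (HlA : lam <= A) by apply Rmax_r.
    destruct (v_props _ _ _ HH A ltac:(lra)) as (B & L & M & HB & HL & HM & HphL & Hphb & Hv).
    destruct (Hv lam ltac:(split; lra)) as (V0 & VB & VQ).
    set (K := 2 * L * (M + 1)).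
    assert (HK : 0 <= K) by (unfold K; nra).
    set (f := fun s => vlim gam g s lam).
    assert (Lv : forall x y, 0 <= x <= t -> 0 <= y <= t -> Rabs (f x - f y) <= (M + K * A) * Rabs (x - y)).
    { assert (W : forall x y, 0 <= x <= y -> y <= t -> Rabs (f y - f x) <= (M + K * A) * (y - x)).
      { intros x y Hxy Hyt. unfold f.
        assert (Q := VQ x y Hxy ltac:(lra)).
        assert (Bx := Hphb _ (VB x ltac:(split; lra))).
        replace (vlim gam g y lam - vlim gam g x lam) with
          ((vlim gam g y lam - vlim gam g x lam + (y - x) * phi (vlim gam g x lam)) - (y - x) * phi (vlim gam g x lam)) by ring.
        eapply Rle_trans; [apply Rabs_triang|]. rewrite Rabs_Ropp, Rabs_mult, (Rabs_pos_eq (y - x)) by lra.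
        assert ((y - x) * Rabs (phi (vlim gam g x lam)) <= (y - x) * M) by (apply Rmult_le_compat_l; lra).
        assert (K * (y - x) ^ 2 <= K * A * (y - x)).
        { replace (K * (y - x) ^ 2) with (K * (y - x) * (y - x)) by ring.
          replace (K * A * (y - x)) with (K * (y - x) * A) by ring.
          apply Rmult_le_compat_l; [nra|lra]. }
        fold K in Q. lra. }
      intros x y Hx Hy. destruct (Rle_dec x y).
      - rewrite Rabs_minus_sym, (Rabs_minus_sym x y), (Rabs_pos_eq (y - x)) by lra.
        apply W; [split|]; lra.
      - rewrite (Rabs_pos_eq (x - y)) by lra. apply W; [split|]; lra. }
    assert (Hf : forall s t', 0 <= s <= t' -> t' <= t ->
      Rabs (f t' - f s - (t' - s) * (- phi (f s))) <= K * (t' - s) ^ 2).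
    { intros s t' Hs Ht'. unfold f.
      replace (vlim gam g t' lam - vlim gam g s lam - (t' - s) * - phi (vlim gam g s lam))
        with (vlim gam g t' lam - vlim gam g s lam + (t' - s) * phi (vlim gam g s lam)) by ring.
      apply VQ; lra. }
    assert (Hc : forall x y, 0 <= x <= t -> 0 <= y <= t ->
      Rabs (- phi (f x) - - phi (f y)) <= L * (M + K * A) * Rabs (x - y)).
    { intros x y Hx Hy.
      replace (- phi (f x) - - phi (f y)) with (- (phi (f x) - phi (f y))) by ring.
      rewrite Rabs_Ropp. eapply Rle_trans.
      - apply HphL; unfold f; apply VB; split; lra.
      - rewrite Rmult_assoc. apply Rmult_le_compat_l; auto. }
    assert (HLc : 0 <= L * (M + K * A)).
    { apply Rmult_le_pos; auto. assert (0 <= K * A) by (apply Rmult_le_pos; lra). lra. }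
    assert (I := ftc_est f (fun s => - phi (f s)) t K (L * (M + K * A)) Ht HK HLc Hf Hc).
    apply is_RInt_opp in I.
    replace (lam - vlim gam g t lam) with (opp (f t - f 0)) by (unfold f; rewrite V0; unfold opp; simpl; ring).
    apply is_RInt_ext with (fun y => opp (- phi (f y))); [|exact I].
    intros x _. unfold opp, f; simpl. ring.
Qed.
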